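(* Let $r(x)=e^{x^2/2}\int_x^\infty e^{-t^2/2}\,dt$ for $x\in\mathbb{R}$. Then: (a) On $(0,\infty)$, the function $x\mapsto x^\alpha r(x)$ is decreasing for $\alpha=0$, increasing for $\alpha=1$, and increasing then decreasing for $\alpha\in(0,1)$. (b) On $(0,\infty)$, the function $x\mapsto x^\alpha r'(x)$ is increasing for $\alpha=0$, decreasing for $\alpha=2$, and decreasing then increasing for $\alpha\in(0,2)$.
   Context: $r$ is Mill's ratio of the standard Gaussian law. *)

(* Defs.v *)
From Stdlib Require Import Reals.
From Coquelicot Require Import Coquelicot.
Open Scope R_scope.

Definition mills (x : R) : R :=
  exp (x ^ 2 / 2) *
  RInt_gen (fun t => exp (- (t ^ 2) / 2)) (at_point x) (Rbar_locally p_infty).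

Definition incr_on (P : R -> Prop) (f : R -> R) : Prop :=
  forall x y, P x -> P y -> x < y -> f x < f y.
Definition decr_on (P : R -> Prop) (f : R -> R) : Prop :=
  forall x y, P x -> P y -> x < y -> f y < f x.

Definition pos_half_line (x : R) : Prop := 0 < x.

Definition incr_then_decr (f : R -> R) : Prop :=
  exists c, 0 < c /\ incr_on (fun x => 0 < x <= c) f /\ decr_on (fun x => c <= x) f.
Definition decr_then_incr (f : R -> R) : Prop :=
  exists c, 0 < c /\ decr_on (fun x => 0 < x <= c) f /\ incr_on (fun x => c <= x) f.

(* Main.v *)
Require Import Defs.
From Stdlib Require Import Reals Lra Psatz FunctionalExtensionality.
From Coquelicot Require Import Coquelicot.
Open Scope R_scope.

Definition phi (t : R) : R := exp (- (t ^ 2) / 2).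
Definition E (t : R) : R := exp (t ^ 2 / 2).

Lemma phi_pos x : 0 < phi x. Proof. apply exp_pos. Qed.
Lemma E_pos x : 0 < E x. Proof. apply exp_pos. Qed.
Lemma E_phi x : E x * phi x = 1.
Proof. unfold E, phi. rewrite <- exp_plus. replace (x^2/2 + - (x^2)/2) with 0 by field. apply exp_0. Qed.

Lemma phi_der x : is_derive phi x (- x * phi x).
Proof. unfold phi. auto_derive; auto.
  replace (- (x * (x * 1)) * / 2) with (- x ^ 2 / 2) by field. field. Qed.
Lemma E_der x : is_derive E x (x * E x).
Proof. unfold E. auto_derive; auto.
  replace (x * (x * 1) * / 2) with (x ^ 2 / 2) by field. field. Qed.

Lemma phi_cont x : continuous phi x.
Proof. apply (@ex_derive_continuous R_AbsRing R_NormedModule). eexists. apply phi_der. Qed.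

Lemma mvt_strict (f f' : R -> R) x y :
  x < y -> (forall t, x <= t <= y -> is_derive f t (f' t)) ->
  (forall t, x < t < y -> 0 < f' t) -> f x < f y.
Proof.
  intros Hxy Hd Hp.
  destruct (MVT_cor2 f f' x y Hxy) as [c [Hc Hc']].
  - intros c Hc. apply is_derive_Reals. auto.
  - specialize (Hp c Hc'). nra.
Qed.

Lemma mvt_weak (f f' : R -> R) x y :
  x < y -> (forall t, x <= t <= y -> is_derive f t (f' t)) ->
  (forall t, x < t < y -> 0 <= f' t) -> f x <= f y.
Proof.
  intros Hxy Hd Hp.
  destruct (MVT_cor2 f f' x y Hxy) as [c [Hc Hc']].
  - intros c Hc. apply is_derive_Reals. auto.
  - specialize (Hp c Hc'). nra.
Qed.

Definition F (b : R) : R := RInt phi 0 b.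

Lemma F_der b : is_derive F b (phi b).
Proof.
  apply (is_derive_RInt phi F 0 b).
  - apply filter_forall. intros y. unfold F. apply (@RInt_correct R_CompleteNormedModule). apply ex_RInt_continuous.
    intros; apply phi_cont.
  - apply phi_cont.
Qed.

Lemma F_0 : F 0 = 0.
Proof. unfold F. rewrite RInt_point. reflexivity. Qed.

Lemma F_bound b : F b <= exp (1/2).
Proof.
  destruct (Rle_lt_dec b 0) as [Hb|Hb].
  - assert (F b <= F 0).
    { destruct Hb as [Hb|Hb]; [|subst; lra].
      apply (mvt_weak F phi). lra. intros; apply F_der. intros; left; apply phi_pos. }
    pose proof (exp_pos (1/2)). rewrite F_0 in H. lra.
  - set (G := fun t => F t + exp (1/2 - t)).
    assert (G b <= G 0).
    { pose proof (mvt_weak (fun t => - G t) (fun t => - (phi t - exp (1/2 - t))) 0 b Hb) as H.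
      assert (- G 0 <= - G b); [|lra]. apply H.
      - intros t _. unfold G. apply (is_derive_opp (fun t => F t + exp (1/2 - t))).
        apply (is_derive_plus F (fun t => exp (1/2 - t))). apply F_der.
        auto_derive; auto. unfold Rminus; field.
      - intros t _. unfold phi. assert (exp (- t ^ 2 / 2) <= exp (1/2 - t)); [|lra].
        destruct (Req_dec (- t ^ 2 / 2) (1/2 - t)) as [e|n]; [rewrite e; lra|].
        left; apply exp_increasing.
        assert (t - 1 <> 0). { intro h. apply n. replace t with 1 by lra. field. }
        pose proof (Rsqr_pos_lt _ H0). unfold Rsqr in H1. nra. }
    unfold G in H. rewrite F_0 in H. replace (1/2 - 0) with (1/2) in H by lra.
    pose proof (exp_pos (1/2 - b)). lra.
Qed.
Lemma Derive_eta (f : R -> R) x l : is_derive f x l -> Derive (fun t => f t) x = l.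
Proof. intros H. apply is_derive_unique. exact H. Qed.

Definition Sset (y : R) : Prop := exists b, y = F b.
Lemma Sset_bound : bound Sset.
Proof. exists (exp (1/2)). intros y [b ->]. apply F_bound. Qed.
Lemma Sset_ne : exists y, Sset y.
Proof. exists (F 0). exists 0. reflexivity. Qed.
Definition L : R := proj1_sig (completeness Sset Sset_bound Sset_ne).
Lemma L_lub : is_lub Sset L.
Proof. unfold L. destruct (completeness Sset Sset_bound Sset_ne). simpl. auto. Qed.

Lemma F_le_L b : F b <= L.
Proof. destruct L_lub as [H _]. apply H. exists b. reflexivity. Qed.

Lemma F_near_L eps : 0 < eps -> exists b0, L - eps < F b0.
Proof.
  intros He. destruct (Classical_Prop.classic (exists b0, L - eps < F b0)) as [h|h]; auto.
  exfalso. destruct L_lub as [_ H].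
  assert (L <= L - eps); [|lra]. apply H. intros y [b ->].
  destruct (Rle_lt_dec (F b) (L - eps)); auto. exfalso; apply h; eauto.
Qed.

Lemma F_incr x y : x < y -> F x < F y.
Proof. intros. apply (mvt_strict F phi); auto. intros; apply F_der. intros; apply phi_pos. Qed.

Definition Q (x : R) : R := L - F x.

Lemma Q_der x : is_derive Q x (- phi x).
Proof. unfold Q. auto_derive. eexists; apply F_der.
  rewrite (Derive_eta _ _ _ (F_der x)). ring. Qed.

Lemma Q_nonneg x : 0 <= Q x.
Proof. unfold Q. pose proof (F_le_L x). lra. Qed.

Lemma Q_small eps : 0 < eps -> exists M, forall x, M <= x -> Q x < eps.
Proof.
  intros He. destruct (F_near_L eps He) as [b0 Hb]. exists b0. intros x Hx.
  unfold Q. destruct Hx as [Hx|Hx]. pose proof (F_incr _ _ Hx). lra. subst; lra.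
Qed.

Lemma F_lim : filterlim F (Rbar_locally p_infty) (locally L).
Proof.
  intros P [eps Heps]. destruct (Q_small eps (cond_pos eps)) as [M HM].
  exists M. intros x Hx. apply Heps. change (Rabs (F x - L) < eps).
  specialize (HM x (Rlt_le _ _ Hx)). unfold Q in HM. pose proof (F_le_L x).
  rewrite Rabs_left1; lra.
Qed.

Lemma mills_eq x : mills x = E x * Q x.
Proof.
  unfold mills. f_equal.
  apply is_RInt_gen_unique.
  unfold Q.
  apply (is_RInt_gen_ext (Derive F)).
  - apply filter_forall. intros ab t _. apply is_derive_unique. apply F_der.
  - apply (is_RInt_gen_Derive F (F x) L).
    + apply filter_forall. intros ab t _. eexists. apply F_der.
    + apply filter_forall. intros ab t _.
      apply (continuous_ext phi). intros; symmetry; apply is_derive_unique; apply F_der.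
      apply phi_cont.
    + intros P HP. unfold filtermap, at_point. apply locally_singleton. exact HP.
    + apply F_lim.
Qed.

Definition lim0 (f : R -> R) : Prop :=
  forall eps, 0 < eps -> exists M, forall x, M <= x -> Rabs (f x) < eps.

Lemma lim0_ext f g : (forall x, f x = g x) -> lim0 f -> lim0 g.
Proof. intros H Hf eps He. destruct (Hf eps He) as [M HM]. exists M. intros; rewrite <- H; auto. Qed.

Lemma lim0_plus f g : lim0 f -> lim0 g -> lim0 (fun x => f x + g x).
Proof.
  intros Hf Hg eps He. destruct (Hf (eps/2)) as [M1 H1]. lra. destruct (Hg (eps/2)) as [M2 H2]. lra.
  exists (Rmax M1 M2). intros x Hx.
  specialize (H1 x (Rle_trans _ _ _ (Rmax_l _ _) Hx)). specialize (H2 x (Rle_trans _ _ _ (Rmax_r _ _) Hx)).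
  pose proof (Rabs_triang (f x) (g x)). lra.
Qed.

Lemma lim0_scal c f : lim0 f -> lim0 (fun x => c * f x).
Proof.
  intros Hf eps He. destruct (Hf (eps / (Rabs c + 1))) as [M HM].
  { apply Rdiv_lt_0_compat; auto. pose proof (Rabs_pos c); lra. }
  exists M. intros x Hx. specialize (HM x Hx). rewrite Rabs_mult.
  pose proof (Rabs_pos c). pose proof (Rabs_pos (f x)).
  assert (Rabs (f x) * (Rabs c + 1) < eps).
  { apply (Rmult_lt_compat_r (Rabs c + 1)) in HM; [|lra].
    replace (eps / (Rabs c + 1) * (Rabs c + 1)) with eps in HM by (field; lra). lra. }
  nra.
Qed.

Lemma lim0_C (h : R -> R) C : (forall x, 1 <= x -> Rabs (h x) <= C / x) -> lim0 h.
Proof.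
  intros H eps He. exists (Rmax 1 (Rabs C / eps + 1)). intros x Hx.
  pose proof (Rmax_l 1 (Rabs C / eps + 1)). pose proof (Rmax_r 1 (Rabs C / eps + 1)).
  specialize (H x ltac:(lra)).
  assert (C / x < eps); [|lra].
  assert (Rabs C < eps * x).
  { assert (Rabs C / eps < x) by lra.
    apply (Rmult_lt_compat_l eps) in H2; auto.
    replace (eps * (Rabs C / eps)) with (Rabs C) in H2 by (field; lra). lra. }
  pose proof (Rle_abs C).
  apply (Rmult_lt_reg_r x). lra. replace (C / x * x) with C by (field; lra). lra.
Qed.

Lemma exp_sq y : 0 <= y -> y * y / 4 <= exp y.
Proof.
  intros Hy. replace (exp y) with (exp (y/2) * exp (y/2)).
  2:{ rewrite <- exp_plus. f_equal. field. }
  assert (1 + y/2 <= exp (y/2)).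
  { destruct (Req_dec (y/2) 0) as [e|n]. rewrite e, exp_0. lra. left; apply exp_ineq1; auto. }
  assert (y/2 <= exp (y/2)) by lra.
  replace (y * y / 4) with ((y/2)*(y/2)) by field.
  apply Rmult_le_compat; lra.
Qed.

Lemma phi_x2 x : 1 <= x -> x ^ 2 * phi x <= 16 / x.
Proof.
  intros Hx. pose proof (exp_sq (x^2/2) ltac:(nra)) as H. fold (E x) in H.
  pose proof (E_phi x). pose proof (phi_pos x). pose proof (E_pos x).
  assert (x^2 * phi x * E x = x^2) by (rewrite Rmult_assoc, (Rmult_comm (phi x)), H0; ring).
  apply (Rmult_le_reg_r (E x)); auto. rewrite H3.
  apply (Rmult_le_reg_r x). lra.
  replace (16 / x * E x * x) with (16 * E x) by (field; lra).
  replace (x ^ 2 / 2 * (x ^ 2 / 2) / 4) with (x^4/16) in H by field.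
  assert (x^2 * x <= x^4) by nra. nra.
Qed.

Lemma incr_to0_neg (f f' : R -> R) a :
  (forall x, a < x -> is_derive f x (f' x)) -> (forall x, a < x -> 0 < f' x) ->
  lim0 f -> forall x, a < x -> f x < 0.
Proof.
  intros Hd Hp Hl x Hx.
  assert (f x < f (x+1)).
  { apply (mvt_strict f f'). lra. intros; apply Hd; lra. intros; apply Hp; lra. }
  assert (f (x+1) <= 0); [|lra].
  destruct (Rle_lt_dec (f (x+1)) 0) as [h|h]; auto. exfalso.
  destruct (Hl (f (x+1)) h) as [M HM].
  set (y := Rmax M (x+2)).
  pose proof (Rmax_l M (x+2)). pose proof (Rmax_r M (x+2)).
  specialize (HM y ltac:(unfold y; lra)).
  assert (f (x+1) < f y).
  { apply (mvt_strict f f'). unfold y; lra. intros; apply Hd; lra. intros; apply Hp; lra. }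
  pose proof (Rle_abs (f y)). lra.
Qed.

Lemma lim0_Q : lim0 Q.
Proof.
  intros eps He. destruct (Q_small eps He) as [M HM]. exists M. intros x Hx.
  rewrite Rabs_pos_eq by apply Q_nonneg. auto.
Qed.

Lemma Q_pos x : 0 < Q x.
Proof.
  assert (- Q x < 0); [|lra].
  apply (incr_to0_neg (fun t => - Q t) phi (x - 1)); [| |apply lim0_ext with (fun t => -1 * Q t); [intros; ring| apply lim0_scal, lim0_Q]|lra].
  - intros t _. auto_derive. eexists; apply Q_der. rewrite (Derive_eta _ _ _ (Q_der t)). ring.
  - intros; apply phi_pos.
Qed.

Lemma xQ_lt x : 0 < x -> x * Q x < phi x.
Proof.
  intros Hx.
  assert (Q x - phi x / x < 0).
  { apply (incr_to0_neg (fun t => Q t - phi t / t) (fun t => phi t / t^2) 0); auto.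
    - intros t Ht. auto_derive. repeat split; try (eexists; first [apply Q_der | apply phi_der]); lra.
      rewrite (Derive_eta _ _ _ (Q_der t)), (Derive_eta _ _ _ (phi_der t)). field. lra.
    - intros t Ht. apply Rdiv_lt_0_compat. apply phi_pos. nra.
    - apply lim0_ext with (fun t => Q t + (-1) * (phi t / t)). intros; ring.
      apply lim0_plus. apply lim0_Q. apply lim0_scal. apply (lim0_C _ 16).
      intros t Ht. pose proof (phi_x2 t Ht). pose proof (phi_pos t).
      rewrite Rabs_pos_eq. 2:{ apply Rdiv_le_0_compat; lra. }
      apply Rle_trans with (t^2 * phi t); auto.
      apply (Rmult_le_reg_r t). lra. replace (phi t / t * t) with (phi t) by (field; lra).
      assert (1 <= t^2 * t) by (simpl; nra). nra. }
  apply (Rmult_lt_compat_l x) in H; auto.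
  replace (x * (Q x - phi x / x)) with (x * Q x - phi x) in H by (field; lra). lra.
Qed.

Lemma base_facts x : 1 <= x ->
  0 < Q x /\ x * Q x < phi x /\ 0 < phi x /\ x ^ 2 * phi x <= 16 / x.
Proof. intros. repeat split. apply Q_pos. apply xQ_lt; lra. apply phi_pos. apply phi_x2; auto. Qed.

Ltac base_tac := let t := fresh "t" in let Ht := fresh "Ht" in
  apply (lim0_C _ 16); intros t Ht; destruct (base_facts t Ht) as (h1 & h2 & h3 & h4);
  assert (t1 : 1 <= t^2) by (simpl; nra);
  assert (t2 : t * phi t <= t^2 * phi t) by (apply Rmult_le_compat_r; simpl; nra);
  assert (t3 : phi t <= t^2 * phi t) by nra;
  assert (t4 : Q t <= t * Q t) by nra;
  assert (t5 : t^2 * Q t = t * (t * Q t)) by ring;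
  assert (t6 : t^3 * Q t = t^2 * (t * Q t)) by ring;
  assert (t7 : t * (t * Q t) <= t * phi t) by (apply Rmult_le_compat_l; lra);
  assert (t8 : t^2 * (t * Q t) <= t^2 * phi t) by (apply Rmult_le_compat_l; lra);
  rewrite Rabs_pos_eq; [ apply Rle_trans with (t^2 * phi t); [lra | exact h4]
    | first [lra | apply Rmult_le_pos; [ (apply pow_le; lra) || lra | lra ]] ].

Lemma lim0_lin7 c1 c2 c3 c4 c5 c6 c7 :
  lim0 (fun x => c1 * Q x + (c2 * (x * Q x) + (c3 * (x^2 * Q x) + (c4 * (x^3 * Q x) +
         (c5 * phi x + (c6 * (x * phi x) + c7 * (x^2 * phi x))))))).
Proof.
  repeat (apply lim0_plus); try (apply lim0_scal; base_tac).
Qed.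

Lemma der_cont (f f' : R -> R) : (forall x, is_derive f x (f' x)) -> continuity f.
Proof.
  intros H x. apply continuity_pt_filterlim.
  apply (@ex_derive_continuous R_AbsRing R_NormedModule). eexists; apply H.
Qed.

Definition pos_neg (f : R -> R) : Prop :=
  exists c, 0 < c /\ (forall x, 0 < x < c -> 0 < f x) /\ (forall x, c < x -> f x < 0).
Definition neg_pos (f : R -> R) : Prop :=
  exists c, 0 < c /\ (forall x, 0 < x < c -> f x < 0) /\ (forall x, c < x -> 0 < f x).

Lemma stage_pn (f f' : R -> R) :
  (forall x, is_derive f x (f' x)) -> lim0 f -> 0 < f 0 -> neg_pos f' -> pos_neg f.
Proof.
  intros Hd Hl H0 [a [Ha [H1 H2]]].
  assert (Hneg : forall x, a < x -> f x < 0).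
  { apply (incr_to0_neg f f'); auto. }
  assert (Hfa : f a < 0).
  { assert (f a < f (a+1)). apply (mvt_strict f f'). lra. intros; auto. intros; apply H2; lra.
    pose proof (Hneg (a+1) ltac:(lra)). lra. }
  destruct (IVT (fun t => - f t) 0 a) as [c [Hc Hfc]].
  { apply (der_cont _ (fun t => - f' t)). intros x. apply (is_derive_opp f). auto. }
  lra. lra. lra.
  assert (Hc0 : c <> 0). { intro; subst. lra. }
  assert (Hca : c <> a). { intro; subst. lra. }
  exists c. repeat split; try lra.
  - intros x Hx. assert (- f x < - f c); [|lra].
    apply (mvt_strict (fun t => - f t) (fun t => - f' t)). lra.
    intros; apply (is_derive_opp f); auto. intros t Ht. assert (f' t < 0); [apply H1; lra | lra].
  - intros x Hx. destruct (Rlt_le_dec a x) as [h|h]. auto.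
    assert (- f c < - f x); [|lra].
    destruct h as [h|h]; [|subst x; lra].
    apply (mvt_strict (fun t => - f t) (fun t => - f' t)). lra.
    intros; apply (is_derive_opp f); auto. intros t Ht. assert (f' t < 0); [apply H1; lra | lra].
Qed.

Lemma stage_np (f f' : R -> R) :
  (forall x, is_derive f x (f' x)) -> lim0 f -> f 0 < 0 -> pos_neg f' -> neg_pos f.
Proof.
  intros Hd Hl H0 [a [Ha [H1 H2]]].
  destruct (stage_pn (fun t => - f t) (fun t => - f' t)) as [c [Hc [K1 K2]]].
  - intros; apply (is_derive_opp f); auto.
  - apply lim0_ext with (fun t => -1 * f t). intros; ring. apply lim0_scal; auto.
  - lra.
  - exists a. repeat split; auto. intros x Hx; specialize (H1 x Hx); lra. intros x Hx; specialize (H2 x Hx); lra.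
  - exists c. repeat split; auto. intros x Hx; specialize (K1 x Hx); lra. intros x Hx; specialize (K2 x Hx); lra.
Qed.

Lemma DQ x : Derive (fun t => Q t) x = - phi x.
Proof. apply is_derive_unique, Q_der. Qed.
Lemma Dphi x : Derive (fun t => phi t) x = - x * phi x.
Proof. apply is_derive_unique, phi_der. Qed.
Lemma exQ x : ex_derive (fun t => Q t) x. Proof. eexists; apply Q_der. Qed.
Lemma exphi x : ex_derive (fun t => phi t) x. Proof. eexists; apply phi_der. Qed.

Ltac dQ := auto_derive; [ repeat match goal with |- _ /\ _ => split | |- True => exact I
     | |- ex_derive (fun _ => Q _) _ => apply exQ | |- ex_derive (fun _ => phi _) _ => apply exphi end
  | rewrite ?DQ, ?Dphi; ring ].

Definition g0 a x := (a + x^2) * Q x - x * phi x.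
Definition g1 a x := 2*x*Q x - (a+1)*phi x.
Definition g2 a x := 2*Q x + (a-1)*x*phi x.
Definition g3 a x := phi x * ((a-3) + (1-a)*x^2).
Definition k0 a x := ((a+1)*x + x^3)*Q x - (a + x^2)*phi x.
Definition k1 a x := (a+1+3*x^2)*Q x - 3*x*phi x.
Definition k2 a x := 6*x*Q x - (a+4)*phi x.
Definition k3 a x := 6*Q x + (a-2)*x*phi x.
Definition k4 a x := phi x * ((a-8) + (2-a)*x^2).

Lemma g0_der a x : is_derive (g0 a) x (g1 a x). Proof. unfold g0, g1. dQ. Qed.
Lemma g1_der a x : is_derive (g1 a) x (g2 a x). Proof. unfold g1, g2. dQ. Qed.
Lemma g2_der a x : is_derive (g2 a) x (g3 a x). Proof. unfold g2, g3. dQ. Qed.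
Lemma k0_der a x : is_derive (k0 a) x (k1 a x). Proof. unfold k0, k1. dQ. Qed.
Lemma k1_der a x : is_derive (k1 a) x (k2 a x). Proof. unfold k1, k2. dQ. Qed.
Lemma k2_der a x : is_derive (k2 a) x (k3 a x). Proof. unfold k2, k3. dQ. Qed.
Lemma k3_der a x : is_derive (k3 a) x (k4 a x). Proof. unfold k3, k4. dQ. Qed.

Ltac l7 c1 c2 c3 c4 c5 c6 c7 :=
  apply lim0_ext with (fun x => c1 * Q x + (c2 * (x * Q x) + (c3 * (x^2 * Q x) + (c4 * (x^3 * Q x) +
         (c5 * phi x + (c6 * (x * phi x) + c7 * (x^2 * phi x))))))); [intros; ring | apply lim0_lin7].

Lemma g0_lim a : lim0 (g0 a). Proof. unfold g0. l7 a 0 1 0 0 (-1) 0. Qed.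
Lemma g1_lim a : lim0 (g1 a). Proof. unfold g1. l7 0 2 0 0 (-(a+1)) 0 0. Qed.
Lemma g2_lim a : lim0 (g2 a). Proof. unfold g2. l7 2 0 0 0 0 (a-1) 0. Qed.
Lemma k0_lim a : lim0 (k0 a). Proof. unfold k0. l7 0 (a+1) 0 1 (-a) 0 (-1). Qed.
Lemma k1_lim a : lim0 (k1 a). Proof. unfold k1. l7 (a+1) 0 3 0 0 (-3) 0. Qed.
Lemma k2_lim a : lim0 (k2 a). Proof. unfold k2. l7 0 6 0 0 (-(a+4)) 0 0. Qed.
Lemma k3_lim a : lim0 (k3 a). Proof. unfold k3. l7 6 0 0 0 0 (a-2) 0. Qed.

Lemma quad_np p q : 0 < p -> 0 < q -> neg_pos (fun x => phi x * (- q + p * x^2)).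
Proof.
  intros Hp Hq. exists (sqrt (q/p)). pose proof (sqrt_lt_R0 (q/p) ltac:(apply Rdiv_lt_0_compat; auto)).
  pose proof (sqrt_sqrt (q/p) ltac:(left; apply Rdiv_lt_0_compat; auto)) as Hs.
  set (s := sqrt (q/p)) in *.
  assert (p * (s * s) = q) by (rewrite Hs; field; lra).
  repeat split; auto; intros x Hx; pose proof (phi_pos x).
  - assert (- q + p * x^2 < 0); [|nra]. assert (x * x < s * s) by nra. simpl. nra.
  - assert (0 < - q + p * x^2); [|nra]. assert (s * s < x * x) by nra. simpl. nra.
Qed.

Lemma g_sign a : 0 < a < 1 -> pos_neg (g0 a).
Proof.
  intros Ha. pose proof (phi_pos 0). pose proof (Q_pos 0).
  apply (stage_pn _ _ (g0_der a) (g0_lim a)). unfold g0. simpl. nra.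
  apply (stage_np _ _ (g1_der a) (g1_lim a)). unfold g1. nra.
  apply (stage_pn _ _ (g2_der a) (g2_lim a)). unfold g2. nra.
  destruct (quad_np (1-a) (3-a)) as [c Hc]; try lra. exists c.
  destruct Hc as [h1 [h2 h3]]. split; [auto|split]; intros x Hx;
  [specialize (h2 x Hx) | specialize (h3 x Hx)]; unfold g3; replace (a - 3) with (-(3-a)) by ring; auto.
Qed.

Lemma k_sign a : 0 < a < 2 -> neg_pos (k0 a).
Proof.
  intros Ha. pose proof (phi_pos 0). pose proof (Q_pos 0).
  apply (stage_np _ _ (k0_der a) (k0_lim a)). unfold k0. simpl. nra.
  apply (stage_pn _ _ (k1_der a) (k1_lim a)). unfold k1. simpl. nra.
  apply (stage_np _ _ (k2_der a) (k2_lim a)). unfold k2. nra.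
  apply (stage_pn _ _ (k3_der a) (k3_lim a)). unfold k3. nra.
  destruct (quad_np (2-a) (8-a)) as [c Hc]; try lra. exists c.
  destruct Hc as [h1 [h2 h3]]. split; [auto|split]; intros x Hx;
  [specialize (h2 x Hx) | specialize (h3 x Hx)]; unfold k4; replace (a - 8) with (-(8-a)) by ring; auto.
Qed.

Lemma DE x : Derive (fun t => E t) x = x * E x.
Proof. apply is_derive_unique, E_der. Qed.
Lemma exE x : ex_derive (fun t => E t) x. Proof. eexists; apply E_der. Qed.

Lemma mills_der x : is_derive mills x (x * E x * Q x - 1).
Proof.
  apply (is_derive_ext (fun t => E t * Q t)). intros; symmetry; apply mills_eq.
  auto_derive. split; [apply exE | split; [apply exQ | exact I]].
  rewrite DE, DQ. pose proof (E_phi x). lra.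
Qed.

Lemma Derive_mills x : Derive mills x = x * E x * Q x - 1.
Proof. apply is_derive_unique, mills_der. Qed.

Lemma pow_der a x : 0 < x -> is_derive (fun t => Rpower t a) x (a * Rpower x (a - 1)).
Proof. intros. apply is_derive_Reals. apply derivable_pt_lim_power; auto. Qed.

Lemma DP a x : 0 < x -> Derive (fun t => Rpower t a) x = a * Rpower x (a - 1).
Proof. intros; apply is_derive_unique, pow_der; auto. Qed.

Lemma Rpower_split a x : 0 < x -> Rpower x a = Rpower x (a-1) * x.
Proof. intros. rewrite <- (Rpower_1 x) at 3 by auto. rewrite <- Rpower_plus. f_equal; ring. Qed.

Lemma Rpower_pos' a x : 0 < Rpower x a.
Proof. unfold Rpower. apply exp_pos. Qed.

Lemma DA a x : 0 < x ->
  is_derive (fun t => Rpower t a * mills t) x (Rpower x (a-1) * E x * g0 a x).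
Proof.
  intros Hx.
  apply (is_derive_ext (fun t => Rpower t a * (E t * Q t))). intros; rewrite mills_eq; auto.
  auto_derive. split; [eexists; apply (pow_der a x Hx) | split; [apply exE | split; [apply exQ | exact I]]].
  rewrite DE, DQ, (DP a x Hx).
  rewrite (Rpower_split a x Hx). unfold g0. ring.
Qed.

Lemma DB a x : 0 < x ->
  is_derive (fun t => Rpower t a * Derive mills t) x (Rpower x (a-1) * E x * k0 a x).
Proof.
  intros Hx.
  apply (is_derive_ext (fun t => Rpower t a * (t * E t * Q t - 1))). intros; rewrite Derive_mills; auto.
  auto_derive. split; [eexists; apply (pow_der a x Hx) | split; [apply exE | split; [apply exQ | exact I]]].
  rewrite DE, DQ, (DP a x Hx).
  rewrite (Rpower_split a x Hx). unfold k0. pose proof (E_phi x).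
  replace (Rpower x (a - 1) * E x * (((a + 1) * x + x ^ 3) * Q x - (a + x ^ 2) * phi x))
    with (Rpower x (a - 1) * (E x * (((a + 1) * x + x ^ 3) * Q x - x ^ 2 * phi x) - a * (E x * phi x))) by ring.
  rewrite H. ring.
Qed.

Lemma mono_incr (u u' : R -> R) x y : 0 < x -> x < y ->
  (forall t, 0 < t -> is_derive u t (u' t)) -> (forall t, x < t < y -> 0 < u' t) -> u x < u y.
Proof. intros. apply (mvt_strict u u'); auto. intros; apply H1; lra. Qed.

Lemma mono_decr (u u' : R -> R) x y : 0 < x -> x < y ->
  (forall t, 0 < t -> is_derive u t (u' t)) -> (forall t, x < t < y -> u' t < 0) -> u y < u x.
Proof.
  intros. assert (- u x < - u y); [|lra].
  apply (mvt_strict (fun t => - u t) (fun t => - u' t)); auto.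
  intros; apply (is_derive_opp u); apply H1; lra. intros t Ht; specialize (H2 t Ht); lra.
Qed.

Lemma fac_pos a t g : 0 < t -> 0 < g -> 0 < Rpower t (a-1) * E t * g.
Proof. intros. pose proof (Rpower_pos' (a-1) t). pose proof (E_pos t). apply Rmult_lt_0_compat; auto. nra. Qed.
Lemma fac_neg a t g : 0 < t -> g < 0 -> Rpower t (a-1) * E t * g < 0.
Proof. intros. pose proof (Rpower_pos' (a-1) t). pose proof (E_pos t).
  assert (0 < Rpower t (a-1) * E t) by nra. nra. Qed.

Lemma g01_pos t : 0 < t -> 0 < g0 1 t.
Proof.
  intros Ht. assert (- g0 1 t < 0); [|lra].
  apply (incr_to0_neg (fun t => - g0 1 t) (fun t => - g1 1 t) 0); auto.
  - intros; apply (is_derive_opp (g0 1)); apply g0_der.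
  - intros s Hs. unfold g1. pose proof (xQ_lt s Hs). lra.
  - apply lim0_ext with (fun t => -1 * g0 1 t). intros; ring. apply lim0_scal, g0_lim.
Qed.

Lemma k02_neg t : 0 < t -> k0 2 t < 0.
Proof.
  intros Ht. apply (incr_to0_neg (k0 2) (k1 2) 0); auto.
  - intros; apply k0_der.
  - intros s Hs. pose proof (g01_pos s Hs). unfold g0 in H. unfold k1. nra.
  - apply k0_lim.
Qed.

Theorem proposition9 :
  (* (a) *)
  (decr_on pos_half_line (fun x => Rpower x 0 * mills x) /\
   incr_on pos_half_line (fun x => Rpower x 1 * mills x) /\
   (forall a, 0 < a < 1 -> incr_then_decr (fun x => Rpower x a * mills x))) /\
  (* (b) *)
  (incr_on pos_half_line (fun x => Rpower x 0 * Derive mills x) /\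
   decr_on pos_half_line (fun x => Rpower x 2 * Derive mills x) /\
   (forall a, 0 < a < 2 -> decr_then_incr (fun x => Rpower x a * Derive mills x))).
Proof.
  unfold decr_on, incr_on, pos_half_line, incr_then_decr, decr_then_incr.
  split; [split; [|split] | split; [|split]].
  - intros x y Hx Hy Hxy. apply (mono_decr _ _ x y Hx Hxy (fun t Ht => DA 0 t Ht)).
    intros t Ht. apply fac_neg. lra. unfold g0. pose proof (xQ_lt t ltac:(lra)). nra.
  - intros x y Hx Hy Hxy. apply (mono_incr _ _ x y Hx Hxy (fun t Ht => DA 1 t Ht)).
    intros t Ht. apply fac_pos. lra. apply g01_pos; lra.
  - intros a Ha. destruct (g_sign a Ha) as [c [Hc [H1 H2]]]. exists c. repeat split; auto.
    + intros x y [Hx _] [Hy Hyc] Hxy. apply (mono_incr _ _ x y Hx Hxy (fun t Ht => DA a t Ht)).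
      intros t Ht. apply fac_pos. lra. apply H1; lra.
    + intros x y Hx Hy Hxy. apply (mono_decr _ _ x y ltac:(lra) Hxy (fun t Ht => DA a t Ht)).
      intros t Ht. apply fac_neg. lra. apply H2; lra.
  - intros x y Hx Hy Hxy. apply (mono_incr _ _ x y Hx Hxy (fun t Ht => DB 0 t Ht)).
    intros t Ht. apply fac_pos. lra. pose proof (g01_pos t ltac:(lra)). unfold g0 in H; unfold k0. nra.
  - intros x y Hx Hy Hxy. apply (mono_decr _ _ x y Hx Hxy (fun t Ht => DB 2 t Ht)).
    intros t Ht. apply fac_neg. lra. apply k02_neg; lra.
  - intros a Ha. destruct (k_sign a Ha) as [c [Hc [H1 H2]]]. exists c. repeat split; auto.
    + intros x y [Hx _] [Hy Hyc] Hxy. apply (mono_decr _ _ x y Hx Hxy (fun t Ht => DB a t Ht)).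
      intros t Ht. apply fac_neg. lra. apply H1; lra.
    + intros x y Hx Hy Hxy. apply (mono_incr _ _ x y ltac:(lra) Hxy (fun t Ht => DB a t Ht)).
      intros t Ht. apply fac_pos. lra. apply H2; lra.
Qed.
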